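(* Let $n\geq 2$ and let $X$ be a finite subset of $\mathbb{R}^n$. Then there exists a polynomial map $F:\mathbb{R}^n\rightarrow\mathbb{R}^n$ such that $F(X)\subseteq \mathbb{R}\times\{0\}^{n-1}$ and $F$ has an inverse which is also a polynomial map $\mathbb{R}^n\rightarrow\mathbb{R}^n$. *)

(* Defs.v *)
From mathcomp Require Import all_boot all_algebra.
From mathcomp Require Import reals.
From mathcomp Require Import mpoly.

Set Implicit Arguments.
Unset Strict Implicit.
Unset Printing Implicit Defensive.

Import GRing.Theory.
Local Open Scope ring_scope.

Definition polymap (R : realType) (n : nat) := 'I_n -> {mpoly R[n]}.

Definition peval (R : realType) (n : nat) (F : polymap R n) (x : 'rV[R]_n)
  : 'rV[R]_n := \row_i (F i).@[fun j => x ord0 j].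

Definition has_poly_inverse (R : realType) (n : nat) (F : polymap R n) : Prop :=
  exists G : polymap R n,
    (forall x, peval G (peval F x) = x) /\ (forall x, peval F (peval G x) = x).

(* Main.v *)
Require Import Defs.
From mathcomp Require Import all_boot all_algebra.
From mathcomp Require Import reals.
From mathcomp Require Import mpoly.
Set Implicit Arguments. Unset Strict Implicit. Unset Printing Implicit Defensive.
Import GRing.Theory Num.Theory.
Local Open Scope ring_scope.

Lemma exists_nonroot (R : realType) (P : {poly R}) : P != 0 -> exists t : R, P.[t] != 0.
Proof.
move=> P0.
suff /hasP [i _ Hi] : has (fun i : nat => P.[i%:R] != 0) (iota 0 (size P)) by exists i%:R.
apply/negPn/negP; rewrite -all_predC => Hall.
suff : false by [].
rewrite -[false](ltnn (size P)) -{1}(size_iota 0 (size P)) -(size_map (fun i : nat => i%:R : R)).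
apply: max_poly_roots => //.
  apply/allP => x /mapP [i iin ->]; apply/rootP.
  by have := allP Hall i iin; rewrite /= negbK => /eqP.
rewrite map_inj_uniq ?iota_uniq //; exact: mulrIn (oner_neq0 R).
Qed.

Lemma exists_nonroot_seq (R : realType) (ps : seq {poly R}) :
  (forall p, p \in ps -> p != 0) -> exists t : R, forall p, p \in ps -> p.[t] != 0.
Proof.
move=> H.
have [|t Ht] := @exists_nonroot R (\prod_(p <- ps) p).
  by rewrite prodf_seq_neq0; apply/allP => p /H.
exists t => p pin; move: Ht; rewrite horner_prod prodf_seq_neq0 => /allP.
by move/(_ p pin).
Qed.

Section S.
Variables (R : realType) (n : nat) (t : R) (Y : seq 'rV[R]_n.+1).

Definition uR (x : 'rV[R]_n.+1) := \sum_(j < n.+1) t ^+ j * x ord0 j.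
Definition LR (y : R) (i : 'I_n.+1) :=
  \sum_(a <- Y) a ord0 i * \prod_(b <- Y | b != a) ((y - uR b) / (uR a - uR b)).
Definition uM : {mpoly R[n.+1]} := \sum_(j < n.+1) t ^+ j *: 'X_j.
Definition LM (p : {mpoly R[n.+1]}) (i : 'I_n.+1) : {mpoly R[n.+1]} :=
  \sum_(a <- Y) a ord0 i *: \prod_(b <- Y | b != a)
     ((p - (uR b)%:MP) * ((uR a - uR b)^-1)%:MP).

Lemma uM_eval v : uM.@[v] = \sum_(j < n.+1) t ^+ j * v j.
Proof. rewrite /uM rmorph_sum; apply: eq_bigr => j _ /=. by rewrite mevalZ mevalXU. Qed.

Lemma LM_eval v p i : (LM p i).@[v] = LR p.@[v] i.
Proof.
rewrite /LM /LR rmorph_sum; apply: eq_bigr => a _ /=. rewrite mevalZ rmorph_prod /=.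
by congr (_ * _); apply: eq_bigr => b _; rewrite mevalM mevalB !mevalC.
Qed.

Definition Fm : polymap R n.+1 := fun i =>
  if i == ord0 then uM else 'X_i - LM uM i.
Definition Gm : polymap R n.+1 := fun i =>
  if i == ord0 then 'X_ord0 - \sum_(j < n.+1 | j != ord0) t ^+ j *: ('X_j + LM 'X_ord0 j)
  else 'X_i + LM 'X_ord0 i.

Lemma uR_split x : uR x = x ord0 ord0 + \sum_(j < n.+1 | j != ord0) t ^+ j * x ord0 j.
Proof. by rewrite /uR (bigD1 ord0) //= expr0 mul1r. Qed.

Lemma Fm_eval x : peval Fm x =
  \row_i (if i == ord0 then uR x else x ord0 i - LR (uR x) i).
Proof.
apply/rowP => i; rewrite !mxE /Fm; case: eqP => _.
  by rewrite uM_eval.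
by rewrite mevalB LM_eval uM_eval mevalXU.
Qed.

Lemma Gm_eval y : peval Gm y =
  \row_i (if i == ord0 then y ord0 ord0 - \sum_(j < n.+1 | j != ord0) t ^+ j * (y ord0 j + LR (y ord0 ord0) j)
          else y ord0 i + LR (y ord0 ord0) i).
Proof.
apply/rowP => i; rewrite !mxE /Gm; case: eqP => _.
  rewrite mevalB rmorph_sum mevalXU; congr (_ - _); apply: eq_bigr => j _.
  by rewrite /= mevalZ mevalD LM_eval !mevalXU.
by rewrite mevalD LM_eval !mevalXU.
Qed.

Lemma Fm_inv : has_poly_inverse Fm.
Proof.
exists Gm; split => x.
  rewrite Gm_eval Fm_eval; apply/rowP => i; rewrite !mxE eqxx.
  case: eqP => [->|/eqP ne].
    rewrite uR_split -addrA [X in _ + X](_ : _ = 0) ?addr0 //; apply/eqP; rewrite subr_eq0; apply/eqP.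
    by apply: eq_bigr => j /negbTE nj; rewrite !mxE nj subrK.
  by rewrite subrK.
rewrite Fm_eval Gm_eval; apply/rowP => i; rewrite !mxE.
set z := \row__ _.
have -> : uR z = x ord0 ord0.
  rewrite uR_split /z mxE eqxx -[RHS]subr0 -addrA; congr (_ + _); rewrite oppr0; apply/eqP; rewrite addrC subr_eq0; apply/eqP.
  by apply: eq_bigr => j /negbTE nj; rewrite !mxE nj.
by case: eqP => [->//|/eqP ne]; rewrite addrK.
Qed.
Lemma LR_node (uY : uniq Y)
  (inj : forall a b, a \in Y -> b \in Y -> a != b -> uR a != uR b)
  c i : c \in Y -> LR (uR c) i = c ord0 i.
Proof.
move=> cY; rewrite /LR (bigD1_seq c) //=.
rewrite big_seq_cond big1 ?mulr1; last first.
  by move=> b /andP [bY bc]; apply: mulfV; rewrite subr_eq0 inj // eq_sym.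
rewrite big1_seq ?addr0 // => a /andP [ac aY].
rewrite -big_filter (bigD1_seq c) ?filter_uniq ?mem_filter ?cY ?(eq_sym c) //=.
rewrite subrr !mul0r mulr0 //. by apply/andP; split.
Qed.
End S.

Lemma lemma2' (R : realType) (n : nat) (X : seq 'rV[R]_n.+2) :
  exists F : polymap R n.+2,
    has_poly_inverse F /\
    (forall x, x \in X -> forall i : 'I_n.+2, (0 < i)%N -> peval F x ord0 i = 0).
Proof.
set Y := undup X.
pose q (a b : 'rV[R]_n.+2) : {poly R} := if a == b then 1
  else \poly_(j < n.+2) (a ord0 (inord j) - b ord0 (inord j)).
have [|t Ht] := @exists_nonroot_seq R [seq q a b | a <- Y, b <- Y].
  move=> p /allpairsP [[a b] /= [_ _ ->]]; rewrite /q; have [_|ab] := eqVneq a b.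
    exact: oner_neq0.
  apply: contra ab => /eqP P0; apply/eqP/rowP => j.
  have := congr1 (fun p : {poly R} => p`_j) P0.
  rewrite coef_poly ltn_ord coef0 inord_val => /eqP; rewrite subr_eq0 => /eqP; exact.
have inj : forall a b, a \in Y -> b \in Y -> a != b -> uR t a != uR t b.
  move=> a b aY bY ab; have := Ht _ (allpairs_f q aY bY).
  rewrite /q (negbTE ab) horner_poly; apply: contra => /eqP e.
  suff -> : \sum_(i < n.+2) (a ord0 (inord i) - b ord0 (inord i)) * t ^+ i = uR t a - uR t b.
    by rewrite e subrr.
  rewrite /uR -sumrB; apply: eq_bigr => j _.
  by rewrite inord_val mulrBl mulrC [X in _ - X]mulrC.
exists (Fm t Y); split; first exact: Fm_inv.
move=> x xX i i0; rewrite Fm_eval mxE.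
have -> : (i == ord0) = false by apply/negbTE; rewrite -val_eqE /= -lt0n.
by rewrite LR_node ?undup_uniq ?mem_undup ?subrr.
Qed.


Theorem lemma2 (R : realType) (n : nat) (hn : (2 <= n)%N) (X : seq 'rV[R]_n) :
  exists F : polymap R n,
    has_poly_inverse F /\
    (forall x, x \in X -> forall i : 'I_n, (0 < i)%N -> peval F x ord0 i = 0).
Proof.
by case: n hn X => [|[|n]] // _ X; apply: lemma2'.
Qed.
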